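(* Let $F$ be a smooth regular distribution supported on $[0,1]$. Then $\tilde{O}(\epsilon^{-1/2})$ oracle queries to $F$ and $f$ suffice to learn $F$ within Lévy distance $O(\epsilon)$.
   Context: A distribution is smooth if it has no point masses and its PDF $f$ is $C^1$; it is regular iff $f'(v)(1-F(v))\ge-2f(v)^2$ for all $v$ (equivalently $qF^{-1}(1-q)$ concave). Oracle query model: an algorithm adaptively chooses points $x$ and receives the exact values $F(x)$ and/or $f(x)$; afterwards it outputs a distribution $\hat F$, which must satisfy the accuracy guarantee in Lévy distance $\mathrm{L\acute{e}vy}(F,G)=\inf\{\epsilon: F(v-\epsilon)-\epsilon\le G(v)\le F(v+\epsilon)+\epsilon\ \forall v\}$. $\tilde{O}$ hides polylog$(1/\epsilon)$ factors. *)

(* Defs.v *)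
From Stdlib Require Import Reals List.
From Coquelicot Require Import Coquelicot.
Open Scope R_scope.

(* A smooth regular distribution supported on [0,1], given by its CDF F and
   its density f (the pointwise values the oracle returns).
   - f vanishes outside [0,1], is nonnegative;
   - F is the integral of f (so F is continuous: no point masses), total mass 1;
   - f is C^1 on [0,1]: it agrees on [0,1] with a C^1 function g on R
     (derivative g', one-sided at the endpoints);
   - regularity: f'(v)(1 - F(v)) >= -2 f(v)^2 on [0,1]
     (outside [0,1], f = f' = 0 and the condition is trivial). *)
Definition smooth_regular01 (F f : R -> R) : Prop :=
  (forall x, (x < 0 \/ 1 < x) -> f x = 0) /\
  (forall x, 0 <= f x) /\
  (forall x, x < 0 -> F x = 0) /\
  (forall x, 0 <= x <= 1 -> F x = RInt f 0 x) /\
  (forall x, 1 <= x -> F x = 1) /\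
  RInt f 0 1 = 1 /\
  exists g g' : R -> R,
    (forall x, is_derive g x (g' x)) /\
    (forall x, continuous g' x) /\
    (forall x, 0 <= x <= 1 -> g x = f x) /\
    (forall v, 0 <= v <= 1 -> g' v * (1 - F v) >= -2 * (f v) ^ 2).

Definition is_cdf (G : R -> R) : Prop :=
  (forall x y, x <= y -> G x <= G y) /\
  (forall x, filterlim G (at_right x) (locally (G x))) /\
  is_lim G m_infty 0 /\
  is_lim G p_infty 1.

Definition levy_close (F G : R -> R) (e : R) : Prop :=
  forall v, F (v - e) - e <= G v /\ G v <= F (v + e) + e.

Definition levy_dist (F G : R -> R) : Rbar :=
  Glb_Rbar (levy_close F G).

(* Adaptive oracle algorithm: a query strategy maps the transcript so far
   (list of (x, F x, f x)) to the next query point; after n queries an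
   output map turns the transcript into a distribution (CDF). *)
Fixpoint transcript (query : list (R * R * R) -> R) (F f : R -> R) (n : nat)
  : list (R * R * R) :=
  match n with
  | O => nil
  | S m => let h := transcript query F f m in
           let x := query h in
           h ++ ((x, F x, f x) :: nil)
  end.

(* Main.v *)
Require Import Defs.
From Stdlib Require Import Reals List Lra Lia ZArith.
From Coquelicot Require Import Coquelicot.
Open Scope R_scope.


Definition SR (F f g g' : R -> R) : Prop :=
  (forall x, (x < 0 \/ 1 < x) -> f x = 0) /\
  (forall x, 0 <= f x) /\
  (forall x, x < 0 -> F x = 0) /\
  (forall x, 0 <= x <= 1 -> F x = RInt f 0 x) /\
  (forall x, 1 <= x -> F x = 1) /\
  RInt f 0 1 = 1 /\
  (forall x, is_derive g x (g' x)) /\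
  (forall x, continuous g' x) /\
  (forall x, 0 <= x <= 1 -> g x = f x) /\
  (forall v, 0 <= v <= 1 -> g' v * (1 - F v) >= -2 * (f v) ^ 2).

Lemma SR_of F f : smooth_regular01 F f -> exists g g', SR F f g g'.
Proof.
  intros (H1&H2&H3&H4&H5&H6&g&g'&H7&H8&H9&H10). exists g, g'. unfold SR; tauto.
Qed.


Lemma g_cont F f g g' : SR F f g g' -> forall x, continuous g x.
Proof.
  intros (_&_&_&_&_&_&Hd&_) x. apply (@ex_derive_continuous R_AbsRing R_NormedModule). exists (g' x). apply Hd.
Qed.

Lemma g_ex F f g g' : SR F f g g' -> forall a b, ex_RInt g a b.
Proof.
  intros HS a b. apply (@ex_RInt_continuous R_CompleteNormedModule). intros. eapply g_cont; eauto.
Qed.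

Lemma F_eq F f g g' : SR F f g g' -> forall x, 0 <= x <= 1 -> F x = RInt g 0 x.
Proof.
  intros HS x Hx. pose proof HS as (_&_&_&H4&_&_&_&_&H9&_).
  rewrite H4 by auto. apply RInt_ext. intros t Ht.
  rewrite Rmin_left in Ht by lra. rewrite Rmax_right in Ht by lra.
  symmetry. apply H9. lra.
Qed.

Lemma F_diff F f g g' : SR F f g g' -> forall x y, 0 <= x -> x <= y -> y <= 1 ->
  F y - F x = RInt g x y.
Proof.
  intros HS x y Hx Hxy Hy. rewrite (F_eq _ _ _ _ HS y) by lra. rewrite (F_eq _ _ _ _ HS x) by lra.
  rewrite <- (RInt_Chasles g 0 x y) by (eapply g_ex; eauto).
  unfold plus; simpl. ring.
Qed.

Lemma F_lower F f g g' : SR F f g g' -> forall x y m, 0 <= x -> x <= y -> y <= 1 ->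
  (forall t, x < t < y -> m <= g t) -> m * (y - x) <= F y - F x.
Proof.
  intros HS x y m Hx Hxy Hy Hb. rewrite (F_diff _ _ _ _ HS x y) by lra.
  replace (m * (y - x)) with (RInt (fun _ => m) x y).
  2:{ rewrite RInt_const. unfold scal; simpl; unfold mult; simpl. ring. }
  apply RInt_le; auto. apply ex_RInt_const. eapply g_ex; eauto.
Qed.

Lemma F_upper F f g g' : SR F f g g' -> forall x y M, 0 <= x -> x <= y -> y <= 1 ->
  (forall t, x < t < y -> g t <= M) -> F y - F x <= M * (y - x).
Proof.
  intros HS x y M Hx Hxy Hy Hb. rewrite (F_diff _ _ _ _ HS x y) by lra.
  replace (M * (y - x)) with (RInt (fun _ => M) x y).
  2:{ rewrite RInt_const. unfold scal; simpl; unfold mult; simpl. ring. }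
  apply RInt_le; auto. eapply g_ex; eauto. apply ex_RInt_const.
Qed.

Lemma g_nn F f g g' : SR F f g g' -> forall t, 0 <= t <= 1 -> 0 <= g t.
Proof.
  intros HS t Ht. pose proof HS as (_&H2&_&_&_&_&_&_&H9&_). rewrite H9; auto.
Qed.

Lemma F0 F f g g' : SR F f g g' -> F 0 = 0.
Proof.
  intros HS. rewrite (F_eq _ _ _ _ HS 0) by lra. apply (@RInt_point R_CompleteNormedModule).
Qed.

Lemma F1 F f g g' : SR F f g g' -> F 1 = 1.
Proof.
  intros HS. pose proof HS as (_&_&_&_&H5&_). apply H5; lra.
Qed.

Lemma F_mono01 F f g g' : SR F f g g' -> forall x y, 0 <= x -> x <= y -> y <= 1 -> F x <= F y.
Proof.
  intros HS x y Hx Hxy Hy.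
  assert (0 * (y - x) <= F y - F x) by (apply (F_lower _ _ _ _ HS); auto;
    intros t Ht; apply (g_nn _ _ _ _ HS); lra). lra.
Qed.

Lemma F_mono F f g g' : SR F f g g' -> forall x y, x <= y -> F x <= F y.
Proof.
  intros HS x y Hxy. pose proof HS as (_&_&H3&_&H5&_).
  pose proof (F0 _ _ _ _ HS). pose proof (F1 _ _ _ _ HS).
  destruct (Rlt_dec x 0); destruct (Rlt_dec y 0).
  - rewrite !H3; lra.
  - rewrite (H3 x) by auto. destruct (Rle_dec y 1).
    + rewrite <- H. apply (F_mono01 _ _ _ _ HS); lra.
    + rewrite H5 by lra. lra.
  - lra.
  - destruct (Rle_dec y 1).
    + apply (F_mono01 _ _ _ _ HS); lra.
    + rewrite (H5 y) by lra. destruct (Rle_dec x 1).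
      * rewrite <- H0. apply (F_mono01 _ _ _ _ HS); lra.
      * rewrite H5; lra.
Qed.

Lemma F_range F f g g' : SR F f g g' -> forall x, 0 <= F x <= 1.
Proof.
  intros HS x. pose proof HS as (_&_&H3&_&H5&_).
  destruct (Rlt_dec x 0). rewrite H3; lra.
  destruct (Rle_dec x 1).
  - rewrite <- (F0 _ _ _ _ HS), <- (F1 _ _ _ _ HS) at 1.
    split; apply (F_mono01 _ _ _ _ HS); lra.
  - rewrite H5; lra.
Qed.

Lemma Ft_derive F f g g' : SR F f g g' -> forall t, is_derive (fun s => RInt g 0 s) t (g t).
Proof.
  intros HS t. apply (@is_derive_RInt R_NormedModule g (fun s => RInt g 0 s) 0 t).
  - apply filter_forall. intros b. apply (@RInt_correct R_CompleteNormedModule). eapply g_ex; eauto.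
  - eapply g_cont; eauto.
Qed.

Lemma phi_mono F f g g' : SR F f g g' -> forall x y, 0 <= x -> x <= y -> y <= 1 -> F y < 1 ->
  f x / (1 - F x) ^ 2 <= f y / (1 - F y) ^ 2.
Proof.
  intros HS x y Hx Hxy Hy HFy. pose proof HS as (_&_&_&_&_&_&Hd&_&H9&Hreg).
  set (Ft := fun s => RInt g 0 s).
  set (psi := fun t => g t / (1 - Ft t) ^ 2).
  assert (HFt : forall t, 0 <= t <= 1 -> F t = Ft t) by (intros; apply (F_eq _ _ _ _ HS); auto).
  assert (Hu : forall t, x <= t <= y -> 0 < 1 - Ft t).
  { intros t Ht. rewrite <- HFt by lra. pose proof (F_mono _ _ _ _ HS t y). lra. }
  set (dpsi := fun t => (g' t * (1 - Ft t) ^ 2 - g t * (INR 2 * (0 - g t) * (1 - Ft t) ^ 1)) / ((1 - Ft t) ^ 2) ^ 2).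
  assert (Hder : forall t, x <= t <= y -> is_derive psi t (dpsi t)).
  { intros t Ht. unfold psi, dpsi. apply is_derive_div.
    - apply Hd.
    - apply (is_derive_pow (fun s => 1 - Ft s) 2 t). apply (@is_derive_minus R_AbsRing R_NormedModule).
      apply (@is_derive_const R_AbsRing R_NormedModule). apply (Ft_derive _ _ _ _ HS).
    - specialize (Hu t Ht). apply pow_nonzero. lra. }
  destruct (MVT_gen psi x y dpsi) as [c [Hc Hmvt]].
  - intros t Ht. rewrite Rmin_left in Ht by lra. rewrite Rmax_right in Ht by lra. apply Hder; lra.
  - intros t Ht. rewrite Rmin_left in Ht by lra. rewrite Rmax_right in Ht by lra.
    apply continuity_pt_filterlim. apply (@ex_derive_continuous R_AbsRing R_NormedModule).
    exists (dpsi t). apply Hder; lra.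
  - rewrite Rmin_left in Hc by lra. rewrite Rmax_right in Hc by lra.
    assert (Hdc : 0 <= dpsi c).
    { unfold dpsi. specialize (Hu c Hc). specialize (Hreg c ltac:(lra)).
      rewrite HFt in Hreg by lra. rewrite <- H9 in Hreg by lra.
      apply Rmult_le_pos. 2: { left. apply Rinv_0_lt_compat. apply pow_lt. apply pow_lt. lra. }
      change (INR 2) with 2. replace ((g' c * (1 - Ft c) ^ 2 - g c * (2 * (0 - g c) * (1 - Ft c) ^ 1)))
        with ((1 - Ft c) * (g' c * (1 - Ft c) + 2 * g c ^ 2)) by ring.
      apply Rmult_le_pos; lra. }
    unfold psi in Hmvt.
    rewrite <- !H9 by lra. rewrite !HFt by lra.
    assert (0 <= dpsi c * (y - x)) by (apply Rmult_le_pos; lra). lra.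
Qed.


Notation entry := (R * R * R)%type.
Definition ex (e : entry) : R := fst (fst e).
Definition ey (e : entry) : R := snd (fst e).

Definition bstep (p : entry -> bool) (lr : R * R) (e : entry) : R * R :=
  if p e then (fst lr, ex e) else (ex e, snd lr).
Definition bracket p (l : list entry) : R * R := fold_left (bstep p) l (0, 1).

Definition qry (preds : list (entry -> bool)) (B : nat) (h : list entry) : R :=
  let j := Nat.div (length h) B in
  let p := nth j preds (fun _ => true) in
  let lr := bracket p (skipn (j * B) h) in (fst lr + snd lr) / 2.

Lemma tr_len q F f n : length (transcript q F f n) = n.
Proof.
  induction n; simpl; auto. rewrite length_app, IHn. simpl. lia.
Qed.

Lemma tr_prefix q F f m k : exists rest, transcript q F f (m + k) = transcript q F f m ++ rest.
Proof.
  induction k.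
  - exists nil. rewrite Nat.add_0_r, app_nil_r. auto.
  - destruct IHk as [rest Hr]. rewrite Nat.add_succ_r. simpl. rewrite Hr.
    exists (rest ++ ((q (transcript q F f m ++ rest), F (q (transcript q F f m ++ rest)),
       f (q (transcript q F f m ++ rest))) :: nil)). rewrite app_assoc. auto.
Qed.

Lemma tr_true q F f n e : In e (transcript q F f n) -> ey e = F (ex e) /\ snd e = f (ex e).
Proof.
  induction n; simpl; [tauto|]. intros H. apply in_app_or in H. destruct H as [H|[H|[]]]; auto.
  subst e. unfold ey, ex; simpl. auto.
Qed.

Lemma tr_in q F f m n e : (m <= n)%nat -> In e (transcript q F f m) -> In e (transcript q F f n).
Proof.
  intros Hmn He. destruct (tr_prefix q F f m (n - m)) as [rest Hr].
  replace (m + (n - m))%nat with n in Hr by lia. rewrite Hr. apply in_or_app. auto.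
Qed.

Definition binv (F f : R -> R) (p : entry -> bool) (h : list entry) (k : nat) (lr : R * R) : Prop :=
  0 <= fst lr /\ snd lr <= 1 /\ snd lr - fst lr = / 2 ^ k /\
  (fst lr = 0 \/ (In (fst lr, F (fst lr), f (fst lr)) h /\ p (fst lr, F (fst lr), f (fst lr)) = false)) /\
  (snd lr = 1 \/ (In (snd lr, F (snd lr), f (snd lr)) h /\ p (snd lr, F (snd lr), f (snd lr)) = true)).

Lemma search_inv preds B F f j k : (0 < B)%nat -> (k <= B)%nat ->
  let h := transcript (qry preds B) F f (j * B + k) in
  binv F f (nth j preds (fun _ => true)) h k (bracket (nth j preds (fun _ => true)) (skipn (j * B) h)).
Proof.
  intros HB. induction k; intros Hk h.
  - subst h. rewrite Nat.add_0_r. rewrite skipn_all2 by (rewrite tr_len; lia).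
    unfold binv, bracket; simpl. repeat split; try lra; auto.
  - subst h. rewrite Nat.add_succ_r. simpl.
    set (h0 := transcript (qry preds B) F f (j * B + k)) in *.
    specialize (IHk ltac:(lia)). simpl in IHk.
    assert (Hl : length h0 = (j * B + k)%nat) by apply tr_len.
    assert (Hj : Nat.div (length h0) B = j).
    { rewrite Hl. rewrite Nat.div_add_l by lia. rewrite Nat.div_small by lia. lia. }
    set (p := nth j preds (fun _ => true)) in *.
    set (x := qry preds B h0).
    assert (Hx : x = (fst (bracket p (skipn (j * B) h0)) + snd (bracket p (skipn (j * B) h0))) / 2).
    { unfold x, qry. cbv zeta. rewrite Hj. auto. }
    rewrite skipn_app. replace (j * B - length h0)%nat with O by lia. simpl skipn.
    unfold bracket at 1. rewrite fold_left_app. simpl. fold (bracket p (skipn (j * B) h0)).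
    destruct (bracket p (skipn (j * B) h0)) as [l r] eqn:E. simpl in Hx.
    unfold binv in IHk |- *. simpl in IHk. destruct IHk as (H1&H2&H3&H4&H5).
    assert (Hp2 : / (2 * 2 ^ k) = / 2 ^ k / 2) by (field; apply pow_nonzero; lra).
    assert (Hpos : 0 < / 2 ^ k) by (apply Rinv_0_lt_compat; apply pow_lt; lra).
    unfold bstep. destruct (p (x, F x, f x)) eqn:Ep; simpl; unfold ex; simpl.
    + repeat split; try rewrite Hp2; try lra.
      * destruct H4 as [H4|[H4 H4']]; [left; auto|right; split; auto; apply in_or_app; auto].
      * right. split; auto. apply in_or_app. right. left. auto.
    + repeat split; try rewrite Hp2; try lra.
      * right. split; auto. apply in_or_app. right. left. auto.
      * destruct H5 as [H5|[H5 H5']]; [left; auto|right; split; auto; apply in_or_app; auto].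
Qed.

Lemma search_ok preds B F f p : (0 < B)%nat -> In p preds ->
  p (0, F 0, f 0) = false -> p (1, F 1, f 1) = true ->
  exists l r, 0 <= l /\ r <= 1 /\ r - l = / 2 ^ B /\
    In (l, F l, f l) ((0, F 0, f 0) :: transcript (qry preds B) F f (length preds * B)) /\
    In (r, F r, f r) ((1, F 1, f 1) :: transcript (qry preds B) F f (length preds * B)) /\
    p (l, F l, f l) = false /\ p (r, F r, f r) = true.
Proof.
  intros HB Hin H0 H1. destruct (In_nth preds p (fun _ => true) Hin) as [j [Hj Hnth]].
  pose proof (search_inv preds B F f j B HB (le_n _)) as Hs. simpl in Hs.
  rewrite Hnth in Hs.
  destruct (bracket p (skipn (j * B) (transcript (qry preds B) F f (j * B + B)))) as [l r].
  unfold binv in Hs; simpl in Hs. destruct Hs as (S1&S2&S3&S4&S5).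
  assert (Hle : (j * B + B <= length preds * B)%nat) by nia.
  exists l, r. repeat split; auto.
  - destruct S4 as [S4|[S4 _]]; [left; subst; auto| right; eapply tr_in; eauto].
  - destruct S5 as [S5|[S5 _]]; [left; subst; auto| right; eapply tr_in; eauto].
  - destruct S4 as [S4|[_ S4]]; [subst; auto|auto].
  - destruct S5 as [S5|[_ S5]]; [subst; auto|auto].
Qed.


Definition lstep (v : R) (best p : R * R) : R * R :=
  if Rle_dec (fst p) v then (if Rlt_dec (fst best) (fst p) then p else best) else best.
Definition hstep (v : R) (best p : R * R) : R * R :=
  if Rlt_dec v (fst p) then (if Rlt_dec (fst p) (fst best) then p else best) else best.
Definition lo v (L : list (R * R)) := fold_left (lstep v) L (0, 0).
Definition hi v (L : list (R * R)) := fold_left (hstep v) L (1, 1).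

Definition Gout (L : list (R * R)) (v : R) : R :=
  if Rlt_dec v 0 then 0 else if Rle_dec 1 v then 1 else
  let a := lo v L in let b := hi v L in
  snd a + (v - fst a) / (fst b - fst a) * (snd b - snd a).

Lemma lo_gen v L b : fst b <= v ->
  let c := fold_left (lstep v) L b in
  (c = b \/ In c L) /\ fst c <= v /\ fst b <= fst c /\ forall p, In p L -> fst p <= v -> fst p <= fst c.
Proof.
  revert b. induction L as [|p L IH]; intros b Hb; simpl.
  - repeat split; try (left; reflexivity); try lra; intros; contradiction.
  - assert (Hs : (lstep v b p = p /\ fst p <= v /\ fst b < fst p) \/ (lstep v b p = b /\ (fst p <= v -> fst p <= fst b))).
    { unfold lstep. repeat destruct Rle_dec; repeat destruct Rlt_dec; simpl in *; try (left; repeat split; auto; lra); right; split; auto; lra. }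
    destruct Hs as [[E [Hp Hbp]] | [E Hp]]; rewrite E.
    + destruct (IH p ltac:(lra)) as (H1&H2&H3&H4). repeat split; auto; try lra.
      * destruct H1 as [H1|H1]; right; [left; auto|right; auto].
      * intros q [Hq|Hq] Hqv; [subst; lra|auto].
    + destruct (IH b Hb) as (H1&H2&H3&H4). repeat split; auto; try lra.
      * destruct H1 as [H1|H1]; [left; auto|right; right; auto].
      * intros q [Hq|Hq] Hqv; [subst; specialize (Hp Hqv); lra|auto].
Qed.

Lemma hi_gen v L b : v < fst b ->
  let c := fold_left (hstep v) L b in
  (c = b \/ In c L) /\ v < fst c /\ fst c <= fst b /\ forall p, In p L -> v < fst p -> fst c <= fst p.
Proof.
  revert b. induction L as [|p L IH]; intros b Hb; simpl.
  - repeat split; try (left; reflexivity); try lra; intros; contradiction.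
  - assert (Hs : (hstep v b p = p /\ v < fst p /\ fst p < fst b) \/ (hstep v b p = b /\ (v < fst p -> fst b <= fst p))).
    { unfold hstep. repeat destruct Rle_dec; repeat destruct Rlt_dec; simpl in *; try (left; repeat split; auto; lra); right; split; auto; lra. }
    destruct Hs as [[E [Hp Hbp]] | [E Hp]]; rewrite E.
    + destruct (IH p ltac:(lra)) as (H1&H2&H3&H4). repeat split; auto; try lra.
      * destruct H1 as [H1|H1]; right; [left; auto|right; auto].
      * intros q [Hq|Hq] Hqv; [subst; lra|auto].
    + destruct (IH b Hb) as (H1&H2&H3&H4). repeat split; auto; try lra.
      * destruct H1 as [H1|H1]; [left; auto|right; right; auto].
      * intros q [Hq|Hq] Hqv; [subst; specialize (Hp Hqv); lra|auto].
Qed.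

Lemma lo_ext v w L b : (forall p, In p L -> (fst p <= v <-> fst p <= w)) ->
  fold_left (lstep v) L b = fold_left (lstep w) L b.
Proof.
  revert b. induction L as [|p L IH]; intros b H; simpl; auto.
  assert (Hp := H p (or_introl eq_refl)).
  replace (lstep w b p) with (lstep v b p).
  - apply IH. intros; apply H; right; auto.
  - unfold lstep. destruct (Rle_dec (fst p) v), (Rle_dec (fst p) w); auto; tauto.
Qed.

Lemma hi_ext v w L b : (forall p, In p L -> (v < fst p <-> w < fst p)) ->
  fold_left (hstep v) L b = fold_left (hstep w) L b.
Proof.
  revert b. induction L as [|p L IH]; intros b H; simpl; auto.
  assert (Hp := H p (or_introl eq_refl)).
  replace (hstep w b p) with (hstep v b p).
  - apply IH. intros; apply H; right; auto.
  - unfold hstep. destruct (Rlt_dec v (fst p)), (Rlt_dec w (fst p)); auto; tauto.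
Qed.

Definition Valid (F : R -> R) (L : list (R * R)) : Prop :=
  forall p, In p L -> 0 <= fst p <= 1 /\ snd p = F (fst p).

Lemma cell F L v : Valid F L -> F 0 = 0 -> F 1 = 1 -> 0 <= v < 1 ->
  let a := lo v L in let b := hi v L in
  0 <= fst a <= v /\ v < fst b <= 1 /\ snd a = F (fst a) /\ snd b = F (fst b) /\
  (forall p, In p L -> fst p <= v -> fst p <= fst a) /\
  (forall p, In p L -> v < fst p -> fst b <= fst p).
Proof.
  intros HV H0 H1 Hv a b.
  destruct (lo_gen v L (0,0) ltac:(simpl; lra)) as (A1&A2&A3&A4).
  destruct (hi_gen v L (1,1) ltac:(simpl; lra)) as (B1&B2&B3&B4).
  fold (lo v L) in *. fold (hi v L) in *. fold a b in A1, A2, A3, A4, B1, B2, B3, B4.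
  simpl in *. repeat split; auto; try lra.
  - destruct A1 as [A1|A1]; [rewrite A1; simpl; auto|]. apply HV in A1. tauto.
  - destruct B1 as [B1|B1]; [rewrite B1; simpl; auto|]. apply HV in B1. tauto.
Qed.

Lemma same_cell L v w : v < 1 -> v <= w -> w < fst (hi v L) -> lo w L = lo v L /\ hi w L = hi v L.
Proof.
  intros Hv1 Hvw Hw.
  destruct (hi_gen v L (1,1)) as (B1&B2&B3&B4). simpl; lra. fold (hi v L) in *.
  split.
  - unfold lo. symmetry. apply lo_ext. intros p Hp. split; intros H; try lra.
    destruct (Rle_dec (fst p) v); auto. specialize (B4 p Hp ltac:(lra)). lra.
  - unfold hi at 1. rewrite <- (hi_ext v w). auto. intros p Hp. split; intros H; try lra.
    specialize (B4 p Hp H). lra.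
Qed.

Lemma G_cell F L v : Valid F L -> F 0 = 0 -> F 1 = 1 -> (forall x y, x <= y -> F x <= F y) ->
  0 <= v < 1 ->
  Gout L v = F (fst (lo v L)) + (v - fst (lo v L)) / (fst (hi v L) - fst (lo v L)) *
    (F (fst (hi v L)) - F (fst (lo v L))) /\
  F (fst (lo v L)) <= Gout L v <= F (fst (hi v L)).
Proof.
  intros HV H0 H1 Hm Hv. destruct (cell F L v HV H0 H1 Hv) as (C1&C2&C3&C4&_).
  assert (E : Gout L v = F (fst (lo v L)) + (v - fst (lo v L)) / (fst (hi v L) - fst (lo v L)) *
    (F (fst (hi v L)) - F (fst (lo v L)))).
  { unfold Gout. destruct (Rlt_dec v 0); [lra|]. destruct (Rle_dec 1 v); [lra|].
    simpl. rewrite C3, C4. auto. }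
  split; auto. rewrite E.
  set (a := fst (lo v L)) in *. set (b := fst (hi v L)) in *.
  assert (Hab : F a <= F b) by (apply Hm; lra).
  assert (0 <= (v - a) / (b - a) <= 1).
  { split. apply Rmult_le_pos; [lra|left; apply Rinv_0_lt_compat; lra].
    apply (Rmult_le_reg_r (b - a)); [lra|]. unfold Rdiv. rewrite Rmult_assoc, Rinv_l; lra. }
  split; nra.
Qed.

Lemma G_mono F L : Valid F L -> F 0 = 0 -> F 1 = 1 -> (forall x y, x <= y -> F x <= F y) ->
  forall v w, v <= w -> Gout L v <= Gout L w.
Proof.
  intros HV H0 H1 Hm v w Hvw.
  assert (Gnn : forall x, 0 <= Gout L x <= 1).
  { intros x. destruct (Rlt_dec x 0). unfold Gout; destruct (Rlt_dec x 0); lra.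
    destruct (Rle_dec 1 x). unfold Gout; destruct (Rlt_dec x 0); [lra|]; destruct (Rle_dec 1 x); lra.
    destruct (G_cell F L x HV H0 H1 Hm ltac:(lra)) as [_ G2].
    destruct (cell F L x HV H0 H1 ltac:(lra)) as (C1&C2&_).
    pose proof (Hm 0 (fst (lo x L)) ltac:(lra)). pose proof (Hm (fst (hi x L)) 1 ltac:(lra)). lra. }
  destruct (Rlt_dec v 0).
  { assert (Gout L v = 0) by (unfold Gout; destruct (Rlt_dec v 0); lra). pose proof (Gnn w); lra. }
  destruct (Rle_dec 1 w).
  { assert (Gout L w = 1) by (unfold Gout; destruct (Rlt_dec w 0); [lra|]; destruct (Rle_dec 1 w); lra).
    pose proof (Gnn v); lra. }
  destruct (cell F L v HV H0 H1 ltac:(lra)) as (C1&C2&C3&C4&C5&C6).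
  destruct (cell F L w HV H0 H1 ltac:(lra)) as (D1&D2&D3&D4&D5&D6).
  destruct (G_cell F L v HV H0 H1 Hm ltac:(lra)) as [Ev Gv].
  destruct (G_cell F L w HV H0 H1 Hm ltac:(lra)) as [Ew Gw].
  destruct (Rle_dec (fst (hi v L)) w).
  - assert (HL : In (hi v L) L \/ hi v L = (1,1)).
    { destruct (hi_gen v L (1,1)) as (B1&_). simpl; lra. fold (hi v L) in B1. tauto. }
    destruct HL as [HL|HL].
    + specialize (D5 _ HL r). pose proof (Hm _ _ D5). lra.
    + rewrite HL in r. simpl in r. lra.
  - destruct (same_cell L v w ltac:(lra) Hvw ltac:(lra)) as [E1 E2].
    rewrite Ew, Ev, E1, E2.
    set (a := fst (lo v L)) in *. set (b := fst (hi v L)) in *.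
    assert (Hab : F a <= F b) by (apply Hm; lra).
    assert (0 <= (w - a) / (b - a) - (v - a) / (b - a)).
    { replace ((w - a) / (b - a) - (v - a) / (b - a)) with ((w - v) / (b - a)) by (field; lra).
      apply Rmult_le_pos; [lra|left; apply Rinv_0_lt_compat; lra]. }
    nra.
Qed.

Lemma G_cdf F L : Valid F L -> F 0 = 0 -> F 1 = 1 -> (forall x y, x <= y -> F x <= F y) ->
  is_cdf (Gout L).
Proof.
  intros HV H0 H1 Hm. split; [|split; [|split]].
  - apply (G_mono F L HV H0 H1 Hm).
  - intros x. destruct (Rlt_dec x 0).
    + apply (filterlim_ext_loc (fun _ => Gout L x)); [|apply filterlim_const].
      assert (Hp : 0 < - x) by lra.
      exists (mkposreal _ Hp). intros y Hy _. simpl in Hy. unfold ball in Hy; simpl in Hy.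
      unfold AbsRing_ball, abs, minus, plus, opp in Hy; simpl in Hy. apply Rabs_def2 in Hy.
      unfold Gout. destruct (Rlt_dec y 0); destruct (Rlt_dec x 0); lra.
    + destruct (Rle_dec 1 x).
      * apply (filterlim_ext_loc (fun _ => Gout L x)); [|apply filterlim_const].
        exists (mkposreal _ Rlt_0_1). intros y _ Hy.
        unfold Gout. destruct (Rlt_dec y 0); destruct (Rlt_dec x 0); try lra.
        destruct (Rle_dec 1 y); destruct (Rle_dec 1 x); lra.
      * destruct (cell F L x HV H0 H1 ltac:(lra)) as (C1&C2&C3&C4&C5&C6).
        set (a := fst (lo x L)) in *. set (b := fst (hi x L)) in *.
        set (A := fun y => F a + (y - a) / (b - a) * (F b - F a)).
        assert (EA : A x = Gout L x).
        { destruct (G_cell F L x HV H0 H1 Hm ltac:(lra)) as [E _]. rewrite E. auto. }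
        rewrite <- EA.
        apply (filterlim_ext_loc A).
        -- assert (Hp : 0 < b - x) by lra. exists (mkposreal _ Hp). intros y Hy Hxy.
           simpl in Hy. unfold ball in Hy; simpl in Hy.
           unfold AbsRing_ball, abs, minus, plus, opp in Hy; simpl in Hy. apply Rabs_def2 in Hy.
           destruct (same_cell L x y ltac:(lra) ltac:(lra) ltac:(fold b; lra)) as [E1 E2].
           destruct (G_cell F L y HV H0 H1 Hm ltac:(lra)) as [E _]. rewrite E, E1, E2. auto.
        -- apply (filterlim_filter_le_1 (F := locally x)). apply filter_le_within.
           apply (@ex_derive_continuous R_AbsRing R_NormedModule). unfold A. auto_derive. lra.
  - apply is_lim_ext_loc with (fun _ => 0); [|apply is_lim_const].
    exists 0. intros y Hy. unfold Gout. destruct (Rlt_dec y 0); lra.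
  - apply is_lim_ext_loc with (fun _ => 1); [|apply is_lim_const].
    exists 1. intros y Hy. unfold Gout. destruct (Rlt_dec y 0); [lra|]. destruct (Rle_dec 1 y); lra.
Qed.


Definition in01 (e : entry) : bool :=
  if Rle_dec 0 (ex e) then if Rle_dec (ex e) 1 then true else false else false.
Definition PL (h : list entry) : list (R * R) :=
  (0, 0) :: (1, 1) :: map (fun e => (ex e, ey e)) (filter in01 h).

Lemma PL_valid F f q n : F 0 = 0 -> F 1 = 1 -> Valid F (PL (transcript q F f n)).
Proof.
  intros H0 H1 p Hp. destruct Hp as [Hp|[Hp|Hp]]; try (subst; simpl; split; auto; lra).
  apply in_map_iff in Hp. destruct Hp as [e [Ee He]]. apply filter_In in He. destruct He as [He Hi].
  subst p. simpl. unfold in01 in Hi. destruct (Rle_dec 0 (ex e)); [|discriminate].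
  destruct (Rle_dec (ex e) 1); [|discriminate]. split; [lra|]. apply (tr_true q F f n e He).
Qed.

Lemma PL_pt F f q n x : 0 <= x <= 1 ->
  In (x, F x, f x) (transcript q F f n) -> In (x, F x) (PL (transcript q F f n)).
Proof.
  intros Hx He. right; right. apply in_map_iff. exists (x, F x, f x). split; auto.
  apply filter_In. split; auto. unfold in01, ex; simpl.
  destruct (Rle_dec 0 x); [|lra]. destruct (Rle_dec x 1); [auto|lra].
Qed.

Lemma side preds B F f p v : (0 < B)%nat -> In p preds -> F 0 = 0 -> F 1 = 1 ->
  (forall x y, x <= y -> F x <= F y) ->
  p (0, F 0, f 0) = false -> p (1, F 1, f 1) = true -> 0 <= v < 1 ->
  let Lst := PL (transcript (qry preds B) F f (length preds * B)) in
  let a := fst (lo v Lst) in let b := fst (hi v Lst) in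
  b - a <= / 2 ^ B \/ (exists l, b <= l <= 1 /\ p (l, F l, f l) = false) \/
  (exists r, 0 <= r <= a /\ p (r, F r, f r) = true).
Proof.
  intros HB Hin H0 H1 Hm Hp0 Hp1 Hv Lst a b.
  destruct (search_ok preds B F f p HB Hin Hp0 Hp1) as (l&r&Hl&Hr&Hw&Il&Ir&Pl&Pr).
  assert (Hpos : 0 < / 2 ^ B) by (apply Rinv_0_lt_compat; apply pow_lt; lra).
  assert (HV : Valid F Lst) by (apply PL_valid; auto).
  destruct (cell F Lst v HV H0 H1 Hv) as (C1&C2&C3&C4&C5&C6). fold a b in C1, C2, C3, C4, C5, C6.
  assert (Ml : In (l, F l) Lst).
  { destruct Il as [Il|Il]. - inversion Il. subst l. rewrite H0. left; auto.
    - apply PL_pt; auto. lra. }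
  assert (Mr : In (r, F r) Lst).
  { destruct Ir as [Ir|Ir]. - inversion Ir. subst r. rewrite H1. right; left; auto.
    - apply PL_pt; auto. lra. }
  destruct (Rle_dec r v).
  - right; right. exists r. split; auto. split; [lra|]. apply (C5 _ Mr). simpl; auto.
  - destruct (Rlt_dec v l).
    + right; left. exists l. split; auto. split; [apply (C6 _ Ml); simpl; auto|lra].
    + left. pose proof (C5 _ Ml ltac:(simpl; lra)). pose proof (C6 _ Mr ltac:(simpl; lra)).
      simpl in *. lra.
Qed.

Lemma levy_cases (F : R -> R) a b v G e : (forall x y, x <= y -> F x <= F y) -> (forall x, F x <= 1) ->
  a <= v < b -> F a <= G <= F b -> 0 <= e ->
  (b - a <= e \/ F b - F a <= e \/ 1 - e <= F a \/ Rabs (G - F v) <= e) ->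
  F (v - e) - e <= G /\ G <= F (v + e) + e.
Proof.
  intros Hm H1 Hv HG He Hc.
  pose proof (Hm (v - e) v ltac:(lra)). pose proof (Hm v (v + e) ltac:(lra)).
  pose proof (Hm a v ltac:(lra)). pose proof (Hm v b ltac:(lra)).
  destruct Hc as [Hc|[Hc|[Hc|Hc]]].
  - pose proof (Hm (v - e) a ltac:(lra)). pose proof (Hm b (v + e) ltac:(lra)). lra.
  - lra.
  - pose proof (H1 (v - e)). pose proof (H1 b). pose proof (Hm a (v + e) ltac:(lra)). lra.
  - apply Rabs_le_between in Hc. lra.
Qed.

Lemma grid_lemma x y c h : 0 <= h -> forall K : nat,
  (forall i : nat, (i <= K)%nat -> y < c + INR i * h \/ c + INR i * h <= x) ->
  y < c \/ c + INR K * h <= x \/ y < x + h.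
Proof.
  intros Hh K. induction K; intros H.
  - destruct (H O (le_n _)) as [H0|H0]; simpl in H0; [left; lra|right; left; simpl; lra].
  - destruct IHK as [I|[I|I]]; [intros; apply H; lia|left; auto| |right; right; auto].
    destruct (H (S K) (le_n _)) as [H0|H0]; [right; right|right; left; auto].
    rewrite S_INR in H0. lra.
Qed.

Lemma u_lemma ua ub r : 1 < r -> forall K : nat,
  (forall j : nat, (j <= K)%nat -> 1 < r ^ S j * ub \/ r ^ S j * ua <= 1) ->
  1 < r * ub \/ r ^ S K * ua <= 1 \/ ua < r * ub.
Proof.
  intros Hr K. induction K; intros H.
  - destruct (H O (le_n _)) as [H0|H0]; simpl in H0; [left; lra|right; left; simpl; lra].
  - destruct IHK as [I|[I|I]]; [intros; apply H; lia|left; auto| |right; right; auto].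
    destruct (H (S K) (le_n _)) as [H0|H0]; [right; right|right; left; auto].
    assert (Hp : 0 < r ^ S K) by (apply pow_lt; lra).
    apply (Rmult_lt_reg_l (r ^ S K)); auto. replace (r ^ S (S K)) with (r ^ S K * r) in H0 by (simpl; ring).
    nra.
Qed.

Lemma geo_lemma x y t r : 0 <= r -> forall K : nat,
  (forall j : nat, (j <= K)%nat -> y < t * r ^ j \/ t * r ^ j <= x) ->
  y < t \/ t * r ^ K <= x \/ y < r * x.
Proof.
  intros Hr K. induction K; intros H.
  - destruct (H O (le_n _)) as [H0|H0]; simpl in H0; [left; lra|right; left; simpl; lra].
  - destruct IHK as [I|[I|I]]; [intros; apply H; lia|left; auto| |right; right; auto].
    destruct (H (S K) (le_n _)) as [H0|H0]; [right; right|right; left; auto].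
    replace (t * r ^ S K) with (r * (t * r ^ K)) in H0 by (simpl; ring).
    assert (r * (t * r ^ K) <= r * x) by (apply Rmult_le_compat_l; auto). lra.
Qed.


Definition rr (N : nat) := 1 + / INR N.
Definition pF (N i : nat) (e : entry) : bool := if Rle_dec (INR i / INR N) (ey e) then true else false.
Definition pU (N j : nat) (e : entry) : bool := if Rle_dec (rr N ^ S j * (1 - ey e)) 1 then true else false.
Definition pPhi (eps : R) (N j : nat) (e : entry) : bool :=
  if Rle_dec (1 - eps) (ey e) then true else
  if Rlt_dec 0 (ex e) then (if Rle_dec (eps * rr N ^ j) (snd e / (1 - ey e) ^ 2) then true else false)
  else false.
Definition K2 (N L : nat) := (N * (8 * L + 2))%nat.
Definition preds (eps : R) (N L : nat) : list (entry -> bool) :=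
  map (pF N) (seq 1 N) ++ map (pU N) (seq 0 (N * (2 * L))) ++ map (pPhi eps N) (seq 0 (S (K2 N L))).

Definition Param (eps : R) (N L : nat) : Prop :=
  0 < eps < 1 /\ (1 <= N)%nat /\ (1 <= L)%nat /\ 1 <= INR N * INR N * eps /\ 1 <= 4 ^ L * eps.

Lemma rN_ge2 N : (1 <= N)%nat -> 2 <= rr N ^ N.
Proof.
  intros HN. assert (0 < INR N) by (apply lt_0_INR; lia).
  pose proof (poly N (/ INR N) ltac:(apply Rinv_0_lt_compat; auto)).
  unfold rr. rewrite Rinv_r in H0 by lra. lra.
Qed.

Lemma pow_mono_base x y n : 0 <= x -> x <= y -> x ^ n <= y ^ n.
Proof. intros. apply pow_incr; auto. Qed.

Lemma rr_pow N k : (1 <= N)%nat -> 2 ^ k <= rr N ^ (N * k).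
Proof.
  intros HN. rewrite pow_mult. apply pow_incr. split; [lra|]. apply rN_ge2; auto.
Qed.

Lemma four_pow L : 4 ^ L = 2 ^ (2 * L).
Proof. rewrite pow_mult. simpl. f_equal. ring. Qed.

Lemma main_v eps N L F f g g' v e : Param eps N L -> SR F f g g' -> 0 <= v < 1 -> 7 * eps <= e ->
  let Lst := PL (transcript (qry (preds eps N L) (2 * L)) F f (length (preds eps N L) * (2 * L))) in
  F (v - e) - e <= Gout Lst v /\ Gout Lst v <= F (v + e) + e.
Proof.
  intros HP HS Hv He Lst. destruct HP as (Heps&HN&HL&HNe&HLe).
  pose proof HS as (_&Hfnn&_&_&_&_&_&_&H9&_).
  pose proof (F_mono _ _ _ _ HS) as Hm. pose proof (F_range _ _ _ _ HS) as Hr01.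
  pose proof (F0 _ _ _ _ HS) as H0. pose proof (F1 _ _ _ _ HS) as H1.
  assert (HV : Valid F Lst) by (apply PL_valid; auto).
  destruct (cell F Lst v HV H0 H1 Hv) as (C1&C2&_&_&_&_).
  destruct (G_cell F Lst v HV H0 H1 Hm Hv) as [EG HG].
  set (a := fst (lo v Lst)) in *. set (b := fst (hi v Lst)) in *.
  apply (levy_cases F a b v (Gout Lst v) e); auto; try lra; [intros x; apply Hr01|].
  destruct (Rle_dec (b - a) eps) as [Hw|Hw]; [left; lra|].
  destruct (Rle_dec (1 - eps) (F a)) as [Ha|Ha]; [right; right; left; lra|].
  assert (HNpos : 0 < INR N) by (apply lt_0_INR; lia).
  assert (HN1 : 1 <= INR N) by (apply (le_INR 1); auto).
  set (r := rr N).
  assert (Hr1 : 1 < r) by (unfold r, rr; pose proof (Rinv_0_lt_compat _ HNpos); lra).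
  assert (Hr2 : r <= 2) by (unfold r, rr; pose proof (Rinv_le_contravar 1 (INR N) ltac:(lra) HN1); rewrite Rinv_1 in *; lra).
  assert (HB : / 2 ^ (2 * L) <= eps).
  { rewrite <- four_pow. assert (0 < 4 ^ L) by (apply pow_lt; lra).
    apply (Rmult_le_reg_l (4 ^ L)); auto. rewrite Rinv_r; lra. }
  assert (HBpos : (0 < 2 * L)%nat) by lia.
  assert (Hside : forall p, In p (preds eps N L) -> p (0, F 0, f 0) = false -> p (1, F 1, f 1) = true ->
     (exists l, b <= l <= 1 /\ p (l, F l, f l) = false) \/ (exists r, 0 <= r <= a /\ p (r, F r, f r) = true)).
  { intros p Hin Hp0 Hp1. destruct (side (preds eps N L) (2 * L) F f p v HBpos Hin H0 H1 Hm Hp0 Hp1 Hv)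
      as [Hs|Hs]; [exfalso; cbv zeta in Hs; unfold a, b, Lst in Hw; lra|exact Hs]. }
  assert (HdF : F b - F a <= / INR N).
  { assert (Hg : forall i : nat, (i <= N - 1)%nat ->
       F b < / INR N + INR i * / INR N \/ / INR N + INR i * / INR N <= F a).
    { intros i Hi. assert (Hin : In (pF N (S i)) (preds eps N L)).
      { unfold preds. apply in_or_app. left. apply in_map. apply in_seq. lia. }
      assert (Eq : INR (S i) / INR N = / INR N + INR i * / INR N) by (rewrite S_INR; field; lra).
      destruct (Hside _ Hin) as [[l [Hl Pl]]|[q [Hq Pq]]].
      - unfold pF, ey; cbn [fst snd]. destruct Rle_dec as [h|h]; auto. rewrite H0 in h.
        rewrite S_INR in h. exfalso. pose proof (pos_INR i).
        assert (0 < (INR i + 1) / INR N) by (apply Rdiv_lt_0_compat; lra). lra.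
      - unfold pF, ey; cbn [fst snd]. destruct Rle_dec as [h|h]; auto. exfalso. apply h. rewrite H1.
        apply (Rmult_le_reg_r (INR N)); auto. unfold Rdiv. rewrite Rmult_assoc, Rinv_l by lra.
        rewrite Rmult_1_r, Rmult_1_l. apply le_INR. lia.
      - left. unfold pF, ey in Pl; cbn [fst snd] in Pl. destruct Rle_dec as [h|h] in Pl; [discriminate|].
        pose proof (Hm b l ltac:(lra)). lra.
      - right. unfold pF, ey in Pq; cbn [fst snd] in Pq. destruct Rle_dec as [h|h] in Pq; [|discriminate].
        pose proof (Hm q a ltac:(lra)). lra. }
    pose proof (Hr01 a). pose proof (Hr01 b).
    assert (HNi : 0 <= / INR N) by (left; apply Rinv_0_lt_compat; auto).
    destruct (grid_lemma (F a) (F b) (/ INR N) (/ INR N) HNi (N - 1) Hg) as [G1|[G1|G1]]; try lra.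
    rewrite minus_INR in G1 by lia. simpl in G1. replace (/ INR N + (INR N - 1) * / INR N) with 1 in G1
      by (field; lra). lra. }
  set (ua := 1 - F a). set (ub := 1 - F b).
  assert (Hua : eps < ua) by (unfold ua; lra).
  assert (Hu : ua < r * ub).
  { assert (Hg : forall j : nat, (j <= N * (2 * L) - 1)%nat -> 1 < r ^ S j * ub \/ r ^ S j * ua <= 1).
    { intros j Hj. assert (Hin : In (pU N j) (preds eps N L)).
      { unfold preds. apply in_or_app. right. apply in_or_app. left. apply in_map. apply in_seq. nia. }
      assert (Hrj : 1 < r ^ S j) by (apply Rlt_pow_R1; [lra|lia]).
      assert (Hrj0 : 0 < r ^ S j) by lra.
      destruct (Hside _ Hin) as [[l [Hl Pl]]|[q [Hq Pq]]].
      - unfold pU, ey; cbn [fst snd]. destruct Rle_dec as [h|h]; auto. rewrite H0 in h. fold r in h. lra.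
      - unfold pU, ey; cbn [fst snd]. destruct Rle_dec as [h|h]; auto. rewrite H1 in h. lra.
      - left. unfold pU, ey in Pl; cbn [fst snd] in Pl. destruct Rle_dec as [h|h] in Pl; [discriminate|].
        fold r in h. pose proof (Hm b l ltac:(lra)). unfold ub.
        assert (r ^ S j * (1 - F l) <= r ^ S j * (1 - F b)) by (apply Rmult_le_compat_l; lra). lra.
      - right. unfold pU, ey in Pq; cbn [fst snd] in Pq. destruct Rle_dec as [h|h] in Pq; [|discriminate].
        fold r in h. pose proof (Hm q a ltac:(lra)). unfold ua.
        assert (r ^ S j * (1 - F a) <= r ^ S j * (1 - F q)) by (apply Rmult_le_compat_l; lra). lra. }
    destruct (u_lemma ua ub r Hr1 _ Hg) as [G1|[G1|G1]]; auto.
    - pose proof (Hr01 a). unfold ua. lra.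
    - exfalso. replace (S (N * (2 * L) - 1)) with (N * (2 * L))%nat in G1 by nia.
      pose proof (rr_pow N (2 * L) HN) as Hp. fold r in Hp. rewrite <- four_pow in Hp.
      assert (4 ^ L * ua <= r ^ (N * (2 * L)) * ua) by (apply Rmult_le_compat_r; lra).
      assert (4 ^ L * eps < 4 ^ L * ua) by (apply Rmult_lt_compat_l; [apply pow_lt; lra|lra]). lra. }
  assert (Hub : eps / r < ub).
  { apply (Rmult_lt_reg_l r); [lra|]. unfold Rdiv. rewrite <- Rmult_assoc, (Rmult_comm r), Rmult_assoc,
      Rinv_r by lra. lra. }
  assert (Hub0 : 0 < ub) by (assert (0 < eps / r) by (apply Rdiv_lt_0_compat; lra); lra).
  set (phi := fun x => f x / (1 - F x) ^ 2).
  assert (HFb : F b < 1) by (unfold ub in Hub0; lra).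
  assert (HFa1 : F a < 1 - eps) by lra.
  assert (Hab : a < b) by lra.
  assert (Hph : forall j : nat, (j <= K2 N L)%nat -> phi b < eps * r ^ j \/ eps * r ^ j <= phi a).
  { intros j Hj. assert (Hin : In (pPhi eps N j) (preds eps N L)).
    { unfold preds. apply in_or_app. right. apply in_or_app. right. apply in_map. apply in_seq. lia. }
    destruct (Hside _ Hin) as [[l [Hl Pl]]|[q [Hq Pq]]].
    - unfold pPhi, ey, ex; cbn [fst snd]. rewrite H0. destruct Rle_dec as [h|h]; [lra|].
      destruct Rlt_dec as [h'|h']; [lra|auto].
    - unfold pPhi, ey, ex; cbn [fst snd]. rewrite H1. destruct Rle_dec as [h|h]; [auto|lra].
    - left. unfold pPhi, ey, ex in Pl; cbn [fst snd] in Pl.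
      destruct Rle_dec as [h|h] in Pl; [discriminate|].
      destruct Rlt_dec as [h'|h'] in Pl; [|lra].
      destruct Rle_dec as [h''|h''] in Pl; [discriminate|]. fold r in h''.
      pose proof (phi_mono _ _ _ _ HS b l ltac:(lra) ltac:(lra) ltac:(lra) ltac:(lra)). unfold phi. lra.
    - right. unfold pPhi, ey, ex in Pq; cbn [fst snd] in Pq.
      destruct Rle_dec as [h|h] in Pq.
      { exfalso. pose proof (Hm q a ltac:(lra)). lra. }
      destruct Rlt_dec as [h'|h'] in Pq; [|discriminate].
      destruct Rle_dec as [h''|h''] in Pq; [|discriminate]. fold r in h''.
      pose proof (phi_mono _ _ _ _ HS q a ltac:(lra) ltac:(lra) ltac:(lra) ltac:(lra)). unfold phi. lra. }
  assert (Hr0 : 0 <= r) by lra.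
  assert (Hrep : forall t, a <= t <= b -> g t = phi t * (1 - F t) ^ 2 /\ phi a <= phi t <= phi b /\
     ub <= 1 - F t <= ua).
  { intros t Ht. pose proof (Hm a t ltac:(lra)). pose proof (Hm t b ltac:(lra)).
    split; [|split; [split|]].
    - rewrite H9 by lra. unfold phi. field. lra.
    - apply (phi_mono _ _ _ _ HS); lra.
    - apply (phi_mono _ _ _ _ HS); lra.
    - unfold ua, ub. lra. }
  assert (Hphia : 0 <= phi a).
  { unfold phi. apply Rmult_le_pos; [apply Hfnn|]. left. apply Rinv_0_lt_compat. apply pow_lt. lra. }
  destruct (geo_lemma (phi a) (phi b) eps r Hr0 (K2 N L) Hph) as [P1|[P1|P1]].
  -
    right; left. assert (F b - F a <= eps * (b - a)).
    { apply (F_upper _ _ _ _ HS); try lra. intros t Ht. destruct (Hrep t ltac:(lra)) as (R1&R2&R3).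
      rewrite R1. assert (0 <= (1 - F t) ^ 2 <= 1) by (split; [apply pow_le; lra|]; pose proof (Hr01 t); nra).
      assert (0 <= phi t) by lra. nra. }
    nra.
  -
    exfalso.
    assert (Hlow : eps * r ^ K2 N L * ub ^ 2 * (b - a) <= F b - F a).
    { apply (F_lower _ _ _ _ HS); try lra. intros t Ht. destruct (Hrep t ltac:(lra)) as (R1&R2&R3).
      rewrite R1. assert (ub ^ 2 <= (1 - F t) ^ 2) by (apply pow_incr; lra).
      assert (0 <= ub ^ 2) by (apply pow_le; lra).
      assert (0 <= r ^ K2 N L) by (apply pow_le; lra). apply Rmult_le_compat; try lra. apply Rmult_le_pos; lra. }
    assert (Hk : 4 * (4 ^ L) ^ 4 <= r ^ K2 N L).
    { unfold K2. pose proof (rr_pow N (8 * L + 2) HN) as Hp. fold r in Hp.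
      replace (2 ^ (8 * L + 2)) with (4 * (4 ^ L) ^ 4) in Hp; auto.
      rewrite pow_add, four_pow, <- pow_mult. replace (2 * L * 4)%nat with (8 * L)%nat by lia. simpl. ring. }
    assert (Hub2 : eps ^ 2 / 4 <= ub ^ 2).
    { assert (eps / 2 <= ub).
      { assert (eps / 2 <= eps / r). { apply Rmult_le_compat_l; [lra|]. apply Rinv_le_contravar; lra. } lra. }
      replace (eps ^ 2 / 4) with ((eps / 2) ^ 2) by field. apply pow_incr; lra. }
    assert (H4 : 1 <= (4 ^ L * eps) ^ 4) by (replace 1 with (1 ^ 4) by ring; apply pow_incr; lra).
    assert (Hm1 : 1 <= eps * r ^ K2 N L * ub ^ 2 * eps).
    { assert (0 <= (4 ^ L) ^ 4) by (apply pow_le; apply pow_le; lra).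
      assert (Hq : eps * (4 * (4 ^ L) ^ 4) * (eps ^ 2 / 4) * eps <= eps * r ^ K2 N L * ub ^ 2 * eps).
      { apply Rmult_le_compat_r; [lra|]. assert (0 <= eps ^ 2) by (apply pow_le; lra).
        apply Rmult_le_compat.
        - apply Rmult_le_pos; lra.
        - lra.
        - apply Rmult_le_compat_l; lra.
        - lra. }
      replace (eps * (4 * (4 ^ L) ^ 4) * (eps ^ 2 / 4) * eps) with ((4 ^ L * eps) ^ 4) in Hq by (field).
      lra. }
    pose proof (Hr01 a). pose proof (Hr01 b).
    set (m := eps * r ^ K2 N L * ub ^ 2) in *.
    assert (0 < m) by nra.
    assert (m * eps < m * (b - a)) by (apply Rmult_lt_compat_l; lra). nra.
  -
    right; right; right.
    assert (Hphib : phi a <= phi b) by (destruct (Hrep b ltac:(lra)) as (_&R2&_); lra).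
    assert (Hpa : 0 < phi a) by nra.
    set (m := phi a * ub ^ 2). set (M := phi b * ua ^ 2).
    assert (Hgb : forall t, a < t < b -> m <= g t <= M).
    { intros t Ht. destruct (Hrep t ltac:(lra)) as (R1&R2&R3). rewrite R1.
      assert (ub ^ 2 <= (1 - F t) ^ 2) by (apply pow_incr; lra).
      assert ((1 - F t) ^ 2 <= ua ^ 2) by (apply pow_incr; lra).
      assert (0 <= ub ^ 2) by (apply pow_le; lra). unfold m, M. split; apply Rmult_le_compat; lra. }
    assert (Fv1 : m * (v - a) <= F v - F a) by (apply (F_lower _ _ _ _ HS); try lra; intros; apply Hgb; lra).
    assert (Fv2 : F v - F a <= M * (v - a)) by (apply (F_upper _ _ _ _ HS); try lra; intros; apply Hgb; lra).
    assert (Fb1 : m * (b - a) <= F b - F a) by (apply (F_lower _ _ _ _ HS); try lra; intros; apply Hgb; lra).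
    assert (Fb2 : F b - F a <= M * (b - a)) by (apply (F_upper _ _ _ _ HS); try lra; intros; apply Hgb; lra).
    assert (Hm0 : 0 < m) by (unfold m; apply Rmult_lt_0_compat; [lra|apply pow_lt; lra]).
    assert (HM : M <= r ^ 3 * m).
    { unfold M, m. assert (ua ^ 2 <= (r * ub) ^ 2) by (apply pow_incr; lra).
      assert (0 <= ua ^ 2) by (apply pow_le; lra).
      replace (r ^ 3 * (phi a * ub ^ 2)) with ((r * phi a) * (r * ub) ^ 2) by ring.
      apply Rmult_le_compat; lra. }
    set (w := (v - a) / (b - a)).
    assert (Hw1 : w * (b - a) = v - a) by (unfold w; field; lra).
    assert (Hw0 : 0 <= w) by (unfold w; apply Rmult_le_pos; [lra|left; apply Rinv_0_lt_compat; lra]).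
    assert (Hw2 : w <= 1) by (apply (Rmult_le_reg_r (b - a)); lra).
    rewrite EG. fold w.
    assert (Hd : Rabs (F a + w * (F b - F a) - F v) <= (M - m) * (v - a)).
    { apply Rabs_le. assert (w * (m * (b - a)) <= w * (F b - F a)) by (apply Rmult_le_compat_l; lra).
      assert (w * (F b - F a) <= w * (M * (b - a))) by (apply Rmult_le_compat_l; lra). nra. }
    assert (Hd2 : (M - m) * (v - a) <= (M - m) * (b - a)) by (assert (m <= M) by (apply (Rmult_le_reg_r (b - a)); lra); apply Rmult_le_compat_l; lra).
    assert (Hd3 : (M - m) * (b - a) <= (r ^ 3 - 1) * (F b - F a)).
    { assert ((M - m) * (b - a) <= (r ^ 3 - 1) * m * (b - a)) by (apply Rmult_le_compat_r; lra).
      assert (1 <= r ^ 3) by (apply pow_R1_Rle; lra) || (pose proof (Rlt_pow_R1 r 3 Hr1 ltac:(lia)); lra).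
      assert ((r ^ 3 - 1) * (m * (b - a)) <= (r ^ 3 - 1) * (F b - F a)) by (apply Rmult_le_compat_l; lra).
      lra. }
    assert (Hr3 : r ^ 3 - 1 <= 7 * / INR N).
    { unfold r, rr. assert (0 < / INR N) by (apply Rinv_0_lt_compat; lra).
      assert (/ INR N <= 1) by (rewrite <- Rinv_1; apply Rinv_le_contravar; lra).
      set (d := / INR N) in *. simpl. nra. }
    assert (Hr3' : 0 <= r ^ 3 - 1) by (pose proof (Rlt_pow_R1 r 3 Hr1 ltac:(lia)); lra).
    assert (Hfin : (r ^ 3 - 1) * (F b - F a) <= 7 * / INR N * / INR N).
    { assert (0 <= F b - F a) by lra.
      assert ((r ^ 3 - 1) * (F b - F a) <= (r ^ 3 - 1) * / INR N) by (apply Rmult_le_compat_l; lra).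
      assert ((r ^ 3 - 1) * / INR N <= 7 * / INR N * / INR N).
      { apply Rmult_le_compat_r; [left; apply Rinv_0_lt_compat; lra|lra]. } lra. }
    assert (HNN : / INR N * / INR N <= eps).
    { rewrite <- Rinv_mult. apply (Rmult_le_reg_l (INR N * INR N)); [nra|].
      rewrite Rinv_r by nra. lra. }
    lra.
Qed.


Lemma exp_le_4pow n : exp (INR n) <= 4 ^ n.
Proof.
  induction n.
  - simpl. rewrite exp_0. lra.
  - rewrite S_INR, exp_plus. simpl. pose proof exp_le_3. pose proof (exp_pos (INR n)).
    pose proof (exp_pos 1). nra.
Qed.

Lemma INR_up x : 0 < x -> INR (Z.to_nat (up x)) = IZR (up x).
Proof.
  intros Hx. destruct (archimed x) as [H1 H2]. rewrite INR_IZR_INZ. rewrite Z2Nat.id; auto.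
  apply le_IZR. lra.
Qed.

Lemma count_bound eps N L : 0 < eps < 1 -> (1 <= L)%nat ->
  INR N <= 2 * / sqrt eps -> INR L <= 1 + ln (/ eps) -> 1 <= / sqrt eps -> 0 < ln (/ eps) ->
  INR (length (preds eps N L) * (2 * L)) <= 54 * / sqrt eps * (1 + ln (/ eps)) ^ 2.
Proof.
  intros Heps HL HN HLb Hs Hl.
  unfold preds. rewrite !length_app, !length_map, !length_seq. unfold K2.
  repeat (first [rewrite mult_INR | rewrite plus_INR]); rewrite (S_INR (N * (8 * L + 2))); repeat (first [rewrite mult_INR | rewrite plus_INR]).
  replace (INR 2) with 2 by (simpl; ring). replace (INR 8) with 8 by (simpl; ring).
  set (s := / sqrt eps) in *. set (la := 1 + ln (/ eps)) in *.
  assert (HL1 : 1 <= INR L) by (apply (le_INR 1); auto).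
  pose proof (pos_INR N).
  assert (E1 : INR N * (10 * INR L + 3) <= 2 * s * (13 * la)).
  { apply Rmult_le_compat; try lra. }
  assert (E2 : INR N + (INR N * (2 * INR L) + (INR N * (8 * INR L + 2) + 1)) <= 27 * s * la).
  { assert (1 <= s * la) by nra. replace (INR N + (INR N * (2 * INR L) + (INR N * (8 * INR L + 2) + 1))) with (INR N * (10 * INR L + 3) + 1) by ring. lra. }
  assert (0 <= INR N + (INR N * (2 * INR L) + (INR N * (8 * INR L + 2) + 1))) by nra.
  replace (54 * s * la ^ 2) with ((27 * s * la) * (2 * la)) by ring.
  apply Rmult_le_compat; lra.
Qed.

Lemma levy_all eps N L F f g g' : Param eps N L -> SR F f g g' ->
  let Lst := PL (transcript (qry (preds eps N L) (2 * L)) F f (length (preds eps N L) * (2 * L))) in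
  levy_close F (Gout Lst) (54 * eps).
Proof.
  intros HP HS Lst v. pose proof HP as (Heps&_).
  pose proof HS as (_&_&H3&_&H5&_).
  pose proof (F_range _ _ _ _ HS) as Hr.
  destruct (Rlt_dec v 0).
  - assert (Gout Lst v = 0) by (unfold Gout; destruct (Rlt_dec v 0); lra).
    rewrite H3 by lra. pose proof (Hr (v + 54 * eps)). lra.
  - destruct (Rle_dec 1 v).
    + assert (Gout Lst v = 1) by (unfold Gout; destruct (Rlt_dec v 0); [lra|]; destruct (Rle_dec 1 v); lra).
      rewrite (H5 (v + 54 * eps)) by lra. pose proof (Hr (v - 54 * eps)). lra.
    + apply (main_v eps N L F f g g' v); auto; lra.
Qed.

Theorem theorem7 :
  exists (C : R) (k : nat), 0 < C /\
  forall eps : R, 0 < eps < 1 ->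
  exists (n : nat) (query : list (R * R * R) -> R)
         (out : list (R * R * R) -> R -> R),
    INR n <= C * / sqrt eps * (1 + ln (/ eps)) ^ k /\
    forall F f : R -> R, smooth_regular01 F f ->
      is_cdf (out (transcript query F f n)) /\
      Rbar_le (levy_dist F (out (transcript query F f n))) (Finite (C * eps)).
Proof.
  exists 54, 2%nat. split; [lra|]. intros eps Heps.
  set (s := / sqrt eps). set (la := ln (/ eps)).
  assert (Hsq : 0 < sqrt eps) by (apply sqrt_lt_R0; lra).
  assert (Hsq1 : sqrt eps <= 1) by (rewrite <- sqrt_1; apply sqrt_le_1_alt; lra).
  assert (Hs1 : 1 <= s) by (unfold s; rewrite <- Rinv_1; apply Rinv_le_contravar; lra).
  assert (Hla : 0 < la).
  { unfold la. rewrite <- ln_1. apply ln_increasing; [lra|]. rewrite <- Rinv_1. apply Rinv_lt_contravar; lra. }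
  set (N := Z.to_nat (up s)). set (L := Z.to_nat (up la)).
  assert (HN : INR N = IZR (up s)) by (apply INR_up; lra).
  assert (HL : INR L = IZR (up la)) by (apply INR_up; lra).
  destruct (archimed s) as [As1 As2]. destruct (archimed la) as [Al1 Al2].
  assert (HN1 : (1 <= N)%nat).
  { destruct N eqn:E; [|lia]. exfalso. simpl in HN. lra. }
  assert (HL1 : (1 <= L)%nat).
  { destruct L eqn:E; [|lia]. exfalso. simpl in HL. lra. }
  assert (HP : Param eps N L).
  { repeat split; try lra; auto.
    - assert (s * s * eps = 1).
      { unfold s. rewrite <- Rinv_mult, sqrt_sqrt by lra. field. lra. }
      assert (s * s <= INR N * INR N) by (apply Rmult_le_compat; lra). nra.
    - pose proof (exp_le_4pow L). rewrite HL in H.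
      assert (exp la <= exp (IZR (up la))) by (destruct (Req_dec la (IZR (up la))) as [E|E]; [rewrite <- E; lra|left; apply exp_increasing; lra]).
      assert (Ela : exp la = / eps) by (unfold la; apply exp_ln; apply Rinv_0_lt_compat; lra).
      assert (Hq : / eps <= 4 ^ L) by lra.
      apply (Rmult_le_compat_r eps) in Hq; [|lra]. rewrite Rinv_l in Hq by lra. lra. }
  exists (length (preds eps N L) * (2 * L))%nat, (qry (preds eps N L) (2 * L)), (fun h => Gout (PL h)).
  split.
  - apply count_bound; auto; try lra.
    + rewrite HN. fold s. lra.
    + rewrite HL. fold la. lra.
  - intros F f Hsr. destruct (SR_of F f Hsr) as (g & g' & HS).
    pose proof (F0 _ _ _ _ HS) as H0. pose proof (F1 _ _ _ _ HS) as H1.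
    split.
    + apply (G_cdf F); auto. apply PL_valid; auto. apply (F_mono _ _ _ _ HS).
    + unfold levy_dist. destruct (Glb_Rbar_correct (levy_close F (Gout (PL
        (transcript (qry (preds eps N L) (2 * L)) F f (length (preds eps N L) * (2 * L))))))) as [Hlb _].
      apply Hlb. apply (levy_all eps N L F f g g' HP HS).
Qed.
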